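(* Let $\Lambda^*$ be a factorial language in $(\mathbb F_+^d)^N$ and fix $\emptyset\ne F\subseteq[N]$, with $F^c=[N]\setminus F$. The following are equivalent: (i) there exists $a\in\bigcap_{i\in F}\ker\phi_{\mathbf i}$ with $aQ_{F^c}\ne0$; (ii) there exists $a\in A$ with $aQ_{F^c}=Q_{\underline\emptyset}$; (iii) for every $\delta_i(k)\in\Lambda^*$ with $(i,k)\in F\times[d]$ there exists $\underline\mu\in\Lambda^*$ with $\underline\mu*\delta_i(k)\notin\Lambda^*$. If $F=[N]$, then (iii) is moreover equivalent to each of: (iv) $\bigcap_{i\in[N]}\ker\phi_{\mathbf i}=\mathbb CQ_{\underline\emptyset}$; (v) $\bigcap_{i\in[N]}\ker\phi_{\mathbf i}\ne(0)$; (vi) $Q_{\underline\emptyset}\in A$.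
   Context: $\mathbb F_+^d$ is the free semigroup on letters $[d]$ with empty word $\emptyset$. In $(\mathbb F_+^d)^N$: $\underline\mu*\underline\nu=(\mu_1\nu_1,\dots,\mu_N\nu_N)$; $|\underline\mu|=(|\mu_1|,\dots,|\mu_N|)$; $\delta_i(k)$ has the letter $k$ in coordinate $i$ and $\emptyset$ elsewhere; $\underline\emptyset=(\emptyset,\dots,\emptyset)$. A factorial language $\Lambda^*\subseteq(\mathbb F_+^d)^N$: for every $i\in[N]$ some $\delta_i(k)\in\Lambda^*$, and $\Lambda^*$ is closed under subwords. On $\ell^2(\Lambda^* )$ with basis $\{e_{\underline w}\}$, $T_{\underline\mu}e_{\underline w}=e_{\underline\mu*\underline w}$ if $\underline\mu*\underline w\in\Lambda^*$, $0$ otherwise. $A=C^*(T_{\underline\mu}^*T_{\underline\mu}:\underline\mu\in\Lambda^* )$. For $i\in[N]$, $P_{\mathbf i}=\sum_{k\in[d]}T_{\delta_i(k)}T_{\delta_i(k)}^*$; for $G\subseteq[N]$, $Q_G=\prod_{i\in G}(I-P_{\mathbf i})$ (with $Q_\emptyset=I$ for the empty set $G$). $Q_{\underline\emptyset}$ denotes the rank-one projection onto $\mathbb Ce_{\underline\emptyset}$ (it equals $Q_{[N]}$). $X_{\mathbf i}(\Lambda^* )=\overline{\operatorname{span}}\{T_{\delta_i(k)}a:a\in A,\ \delta_i(k)\in\Lambda^*\}$ and $\ker\phi_{\mathbf i}=\{a\in A:a\xi=0\ \forall\xi\in X_{\mathbf i}(\Lambda^* )\}$. *)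

(* Defs.v *)
(* concrete model of l^2(Lambda^* ) over C = R[i] (R a realType),
   with operators given by formulas on all functions W -> C, and all identities
   / norm estimates taken on l^2 vectors only. *)
From HB Require Import structures.
From mathcomp Require Import all_boot all_order all_algebra.
From mathcomp Require Import reals.
From mathcomp Require Import complex.
Set Implicit Arguments. Unset Strict Implicit. Unset Printing Implicit Defensive.
Import Order.TTheory GRing.Theory Num.Theory.
Local Open Scope ring_scope.

Section FactLang.
Variables (R : realType) (d N : nat).

Definition CC := R[i].
Definition rc (c : R) : CC := Complex c 0.

(* (F_+^d)^N : N-tuples of words over the alphabet [d] = 'I_d *)
Definition W := {ffun 'I_N -> seq 'I_d}.
Definition emptyW : W := [ffun _ => [::]].
Definition wcat (mu w : W) : W := [ffun i => mu i ++ w i].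
Definition delta (i : 'I_N) (k : 'I_d) : W :=
  [ffun j => if j == i then [:: k] else [::]].

Definition factorial_language (L : pred W) : Prop :=
  (forall i : 'I_N, exists k : 'I_d, L (delta i k)) /\
  (forall w u : W, L w -> (forall i, infix (u i) (w i)) -> L u).

Variable L : pred W.

Definition V := W -> CC.
Definition Op := V -> V.

Definition sqsum (f : V) (s : seq W) : CC := \sum_(w <- s) `|f w| ^+ 2.

Definition l2 (f : V) : Prop :=
  (forall w, ~~ L w -> f w = 0) /\
  exists M : R, forall s, uniq s -> sqsum f s <= rc M.

(* ||g|| <= c ||f||  (norms in l^2) *)
Definition norm_le (g : V) (c : R) (f : V) : Prop :=
  forall s, uniq s -> forall eta : R, 0 < eta ->
    exists t, uniq t /\ sqsum g s <= rc (c ^+ 2) * sqsum f t + rc eta.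

Definition bounded (a : Op) : Prop :=
  (forall f, l2 f -> l2 (a f)) /\
  (forall f g, l2 f -> l2 g -> a (fun w => f w + g w) = (fun w => a f w + a g w)) /\
  (forall (z : CC) f, l2 f -> a (fun w => z * f w) = (fun w => z * a f w)) /\
  exists c : R, 0 <= c /\ forall f, l2 f -> norm_le (a f) c f.

Definition opeq (a b : Op) : Prop := forall f, l2 f -> a f = b f.
Definition opdist_le (a b : Op) (eps : R) : Prop :=
  forall f, l2 f -> norm_le (fun w => a f w - b f w) eps f.

Definition op0 : Op := fun _ _ => 0.
Definition opid : Op := id.
Definition opadd (a b : Op) : Op := fun f w => a f w + b f w.
Definition opsub (a b : Op) : Op := fun f w => a f w - b f w.
Definition opscale (z : CC) (a : Op) : Op := fun f w => z * a f w.
Definition opmul (a b : Op) : Op := fun f => a (b f).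

Definition strip (mu v : W) : W := [ffun i => drop (size (mu i)) (v i)].
Definition T (mu : W) : Op := fun f v =>
  if [forall i, prefix (mu i) (v i)] && L v then f (strip mu v) else 0.
Definition Tadj (mu : W) : Op := fun f w =>
  if L (wcat mu w) then f (wcat mu w) else 0.

(* the algebra generated by {T_mu^* T_mu : mu in Lambda^*} (it is *-closed,
   the generators being self-adjoint and commuting) *)
Inductive alg0 : Op -> Prop :=
| alg0_gen mu : L mu -> alg0 (opmul (Tadj mu) (T mu))
| alg0_add a b : alg0 a -> alg0 b -> alg0 (opadd a b)
| alg0_scale z a : alg0 a -> alg0 (opscale z a)
| alg0_mul a b : alg0 a -> alg0 b -> alg0 (opmul a b).

Definition inA (a : Op) : Prop :=
  bounded a /\
  forall eps : R, 0 < eps -> exists p, alg0 p /\ opdist_le a p eps.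

Definition P (i : 'I_N) : Op :=
  \big[opadd/op0]_(k < d) opmul (T (delta i k)) (Tadj (delta i k)).
Definition Q (G : {set 'I_N}) : Op :=
  \big[opmul/opid]_(i in G) opsub opid (P i).
Definition Qempty : Op := fun f v => if v == emptyW then f v else 0.

Inductive spanX (i : 'I_N) : Op -> Prop :=
| spanX_0 : spanX i op0
| spanX_gen k a : L (delta i k) -> inA a -> spanX i (opmul (T (delta i k)) a)
| spanX_add a b : spanX i a -> spanX i b -> spanX i (opadd a b)
| spanX_scale z a : spanX i a -> spanX i (opscale z a).

Definition inX (i : 'I_N) (xi : Op) : Prop :=
  bounded xi /\
  forall eps : R, 0 < eps -> exists p, spanX i p /\ opdist_le xi p eps.

Definition in_ker_phi (i : 'I_N) (a : Op) : Prop :=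
  inA a /\ forall xi, inX i xi -> opeq (opmul a xi) op0.

End FactLang.

(* Main.v *)
Require Import Defs.
From HB Require Import structures.
From mathcomp Require Import all_boot all_order all_algebra.
From mathcomp Require Import reals complex.
From mathcomp Require Import lra.
From Stdlib Require Import FunctionalExtensionality Classical.
Import Order.TTheory GRing.Theory Num.Theory.
Local Open Scope ring_scope.

Set Implicit Arguments. Unset Strict Implicit. Unset Printing Implicit Defensive.

Section Norms.
Variable R : realType.
Definition nm (x : CC R) : R := complex.Re `|x|.
Local Open Scope complex_scope.
Lemma normE (x : CC R) : `|x| = (nm x)%:C.
Proof. by rewrite /nm normc_def. Qed.
Lemma nm_ge0 x : 0 <= nm x.
Proof. by have := normr_ge0 x; rewrite normE ler0c. Qed.
Lemma nmD x y : nm (x + y) <= nm x + nm y.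
Proof. by have := ler_normD x y; rewrite !normE -rmorphD lecR. Qed.
Lemma nmM x y : nm (x * y) = nm x * nm y.
Proof. by have := normrM x y; rewrite !normE -rmorphM => /complexI. Qed.
Lemma nmN x : nm (- x) = nm x.
Proof. by have := normrN x; rewrite !normE => /complexI. Qed.
Lemma nmB x y : nm (x - y) = nm (y - x).
Proof. by rewrite -nmN opprB. Qed.
Lemma nm0 : nm 0 = 0.
Proof. by have := normr0 (CC R); rewrite normE -(rmorph0 (real_complex R)) => /complexI. Qed.
Lemma nm1 : nm 1 = 1.
Proof. by have := normr1 (CC R); rewrite normE -(rmorph1 (real_complex R)) => /complexI. Qed.
Lemma nm_eq0 x : nm x = 0 -> x = 0.
Proof. move=> h; apply/normr0_eq0; by rewrite normE h. Qed.
Lemma rcE (c : R) : rc c = c%:C. Proof. by []. Qed.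
Lemma rc_le (a b : R) : (rc a <= rc b) = (a <= b).
Proof. by rewrite !rcE lecR. Qed.
Lemma nm_rc (a : R) : 0 <= a -> nm (rc a) = a.
Proof.
move=> a0; have := normr_idP (x := rc a); rewrite rcE ler0c a0 normE => h.
by have /complexI := h isT.
Qed.

Lemma nmDsq x y : nm (x + y) ^+ 2 <= 2 * nm x ^+ 2 + 2 * nm y ^+ 2.
Proof.
have h := nmD x y; have h0 := nm_ge0 (x + y); have h1 := nm_ge0 x; have h2 := nm_ge0 y.
move: h h0 h1 h2; generalize (nm (x + y)) (nm x) (nm y) => c a b h h0 h1 h2.
have : c ^+ 2 <= (a + b) ^+ 2 by rewrite ler_pXn2r // ?nnegrE; lra.
have := sqr_ge0 (a - b); nra.
Qed.

Lemma nm_small (x : CC R) (K : R) :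
  (forall e : R, 0 < e -> e <= 1 -> nm x ^+ 2 <= e * K) -> x = 0.
Proof.
move=> h; apply: nm_eq0; apply/eqP; apply: contraT => hx.
have r0 : 0 < nm x ^+ 2 by rewrite exprn_gt0 // lt_def hx nm_ge0.
set r := nm x ^+ 2 in r0 h.
set K1 := `|K| + 1.
have K10 : 0 < K1 by rewrite /K1; have := normr_ge0 K; lra.
have hK : K <= K1 by rewrite /K1; have := ler_norm K; lra.
set e := r / (r + K1).
have rK : 0 < r + K1 by lra.
have e0 : 0 < e by rewrite /e divr_gt0.
have e1 : e <= 1 by rewrite /e ler_pdivrMr // mul1r; lra.
have := h e e0 e1.
have eK : e * K <= e * K1 by rewrite ler_pM2l.
have : e * K1 < r.
  rewrite /e mulrAC ltr_pdivrMr //. nra.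
lra.
Qed.
End Norms.

Section Lang.
Variables (R : realType) (d N : nat) (L : pred (W d N)).
Hypothesis hsub : forall w u : W d N, L w -> (forall i, infix (u i) (w i)) -> L u.
Hypothesis hL0 : L (emptyW d N).
Notation WW := (W d N).
Notation VV := (V R d N).
Notation OO := (Op R d N).
Notation e0 := (emptyW d N).
Implicit Types (w u v mu : WW) (f g : VV) (a b p : OO).

Lemma wcat0 w : wcat e0 w = w. Proof. by apply/ffunP=> i; rewrite !ffunE. Qed.
Lemma strip_wcat mu w : strip mu (wcat mu w) = w.
Proof. by apply/ffunP=> i; rewrite !ffunE drop_size_cat. Qed.
Lemma pre_wcat mu w : [forall i, prefix (mu i) (wcat mu w i)].
Proof. by apply/forallP=> i; rewrite ffunE prefix_prefix. Qed.
Lemma wcat_strip mu v : [forall i, prefix (mu i) (v i)] -> wcat mu (strip mu v) = v.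
Proof.
move/forallP=> h; apply/ffunP=> i; rewrite !ffunE.
by have [s' ->] := prefixP (h i); rewrite drop_size_cat.
Qed.
Lemma L_wcat_l mu w : L (wcat mu w) -> L mu.
Proof. move=> h; apply: hsub h _ => i; rewrite ffunE; exact: prefix_infix. Qed.
Lemma L_wcat_r mu w : L (wcat mu w) -> L w.
Proof. move=> h; apply: hsub h _ => i; rewrite ffunE; exact: suffix_infix. Qed.

Definition gen mu : OO := opmul (Tadj L mu) (T L mu).
Lemma genE mu f w : gen mu f w = if L (wcat mu w) then f w else 0.
Proof. by rewrite /gen /opmul /Tadj /T; case: ifP => h //; rewrite pre_wcat h /= strip_wcat. Qed.

Lemma pre_delta i k w : [forall j, prefix (delta i k j) (w j)] = (ohead (w i) == Some k).
Proof.
apply/forallP/eqP.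
  move/(_ i); rewrite ffunE eqxx; case: (w i) => [|y s] //.
  by move=> /= /andP [/eqP -> _].
move=> h j; rewrite ffunE; case: eqP => [->|_]; last exact: prefix0s.
by case: (w i) h => [|y s] // /= [->]; rewrite eqxx prefix0s.
Qed.

Definition ev u : VV := fun w => if w == u then 1 else 0.
Definition xi i k : OO := opmul (T L (delta i k)) (gen e0).
Lemma xiE i k f v : xi i k f v =
  if (ohead (v i) == Some k) && L v && L (strip (delta i k) v)
  then f (strip (delta i k) v) else 0.
Proof.
rewrite /xi /opmul /T pre_delta genE wcat0.
by case: ifP => //= ->; case: ifP.
Qed.

Lemma xi_ev i k u : L (wcat (delta i k) u) -> xi i k (ev u) = ev (wcat (delta i k) u).
Proof.
move=> hw; apply: functional_extensionality => v; rewrite xiE /ev.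
case: (eqVneq v (wcat (delta i k) u)) => [->|hne].
  rewrite strip_wcat eqxx hw (L_wcat_r hw) !ffunE eqxx /=.
  by rewrite eqxx.
case: ifP => // /andP [/andP [hp _] _]; case: eqP => // hs; exfalso.
move/negP: hne; apply; apply/eqP.
by rewrite -hs wcat_strip // pre_delta.
Qed.

Definition supp f := forall w, ~~ L w -> f w = 0.
Definition l2bound f (M : R) := forall s, uniq s -> \sum_(w <- s) nm (f w) ^+ 2 <= M.

Lemma sqsumE f s : sqsum f s = rc (\sum_(w <- s) nm (f w) ^+ 2).
Proof.
rewrite /sqsum rcE rmorph_sum; apply: eq_bigr => w _.
by rewrite normE rmorphXn.
Qed.

Lemma l2bound_ge0 f M : l2bound f M -> 0 <= M.
Proof. by move/(_ [::] isT); rewrite big_nil. Qed.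

Lemma l2P f : l2 L f -> supp f /\ exists M, l2bound f M.
Proof.
case=> hs [M hM]; split => // ; exists M => s us.
by have := hM s us; rewrite sqsumE rc_le.
Qed.

Lemma l2_of f M : supp f -> l2bound f M -> l2 L f.
Proof.
move=> hs hM; split => //; exists M => s us.
by rewrite sqsumE rc_le; apply: hM.
Qed.

Lemma l2_pt f M w : l2bound f M -> nm (f w) ^+ 2 <= M.
Proof. by move/(_ [:: w] isT); rewrite big_seq1. Qed.

Lemma ev_bound u : l2bound (ev u) 1.
Proof.
move=> s us.
rewrite (eq_bigr (fun w => if w == u then 1 else 0)); last first.
  by move=> w _; rewrite /ev; case: eqP => _; rewrite ?nm1 ?nm0 ?expr1n ?expr0n.
rewrite -big_mkcond big_const_seq.
have := count_uniq_mem u us.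
have -> : count (pred1 u) s = count (fun w => w == u) s by [].
by move=> ->; case: (u \in s) => /=; rewrite ?addr0.
Qed.

Lemma ev_l2 u : L u -> l2 L (ev u).
Proof.
move=> hu; apply: (l2_of (M := 1)); last exact: ev_bound.
by move=> w hw; rewrite /ev; case: eqP => // e; rewrite e hu in hw.
Qed.

Lemma sum_le_scale (s : seq WW) (g h : WW -> R) (c : R) :
  (forall w, g w <= c * h w) -> \sum_(w <- s) g w <= c * \sum_(w <- s) h w.
Proof. by move=> hg; rewrite mulr_sumr; apply: ler_sum => w _. Qed.


Definition inv_m (m : WW -> CC R) :=
  forall u v, (forall mu, L mu -> L (wcat mu u) = L (wcat mu v)) -> m u = m v.

Lemma alg0_diag p : alg0 L p -> exists m : WW -> CC R,
  (forall f w, p f w = m w * f w) /\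
  (exists C, 0 <= C /\ forall w, nm (m w) <= C) /\ inv_m m.
Proof.
elim=> {p} [mu hmu | a b _ [ma [ha [[Ca [Ca0 hCa]] ia]]] _ [mb [hb [[Cb [Cb0 hCb]] ib]]]
           | z a _ [ma [ha [[Ca [Ca0 hCa]] ia]]]
           | a b _ [ma [ha [[Ca [Ca0 hCa]] ia]]] _ [mb [hb [[Cb [Cb0 hCb]] ib]]]].
- exists (fun w => if L (wcat mu w) then 1 else 0); split; last split.
  + by move=> f w; have := genE mu f w; rewrite /gen => ->; case: ifP; rewrite ?mul1r ?mul0r.
  + exists 1; split => // w; case: ifP; rewrite ?nm1 ?nm0 //.
  + by move=> u v h; rewrite (h mu hmu).
- exists (fun w => ma w + mb w); split; last split.
  + by move=> f w; rewrite /opadd ha hb mulrDl.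
  + exists (Ca + Cb); split; first by rewrite addr_ge0.
    by move=> w; apply: le_trans (nmD _ _) _; apply: lerD.
  + by move=> u v h; rewrite (ia u v h) (ib u v h).
- exists (fun w => z * ma w); split; last split.
  + by move=> f w; rewrite /opscale ha mulrA.
  + exists (nm z * Ca); split; first by rewrite mulr_ge0 ?nm_ge0.
    by move=> w; rewrite nmM; apply: ler_wpM2l; rewrite ?nm_ge0.
  + by move=> u v h; rewrite (ia u v h).
- exists (fun w => ma w * mb w); split; last split.
  + by move=> f w; rewrite /opmul ha hb mulrA.
  + exists (Ca * Cb); split; first by rewrite mulr_ge0.
    by move=> w; rewrite nmM; apply: ler_pM; rewrite ?nm_ge0.
  + by move=> u v h; rewrite (ia u v h) (ib u v h).
Qed.

Lemma nmXM (x y : CC R) : nm (x * y) ^+ 2 = nm x ^+ 2 * nm y ^+ 2.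
Proof. by rewrite nmM exprMn. Qed.

Lemma diag_bounded a (m : WW -> CC R) C : 0 <= C -> (forall w, nm (m w) <= C) ->
  (forall f w, a f w = m w * f w) -> bounded L a.
Proof.
move=> C0 hC ha.
have hpt : forall f w, nm (a f w) ^+ 2 <= C ^+ 2 * nm (f w) ^+ 2.
  move=> f w; rewrite ha nmXM; apply: ler_wpM2r; first exact: exprn_ge0 (nm_ge0 _).
  by rewrite lerXn2r // ?nnegrE ?nm_ge0.
split; last split; last split.
- move=> f /l2P [hs [M hM]]; apply: (l2_of (M := C ^+ 2 * M)).
    by move=> w hw; rewrite ha hs // mulr0.
  move=> s us; apply: le_trans (sum_le_scale s (fun w => hpt f w)) _.
  by apply: ler_wpM2l; rewrite ?exprn_ge0 //; apply: hM.
- by move=> f g _ _; apply: functional_extensionality => w; rewrite !ha mulrDr.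
- by move=> z f _; apply: functional_extensionality => w; rewrite !ha mulrCA.
- exists C; split => // f _ s us eta eta0; exists s; split => //.
  rewrite !sqsumE !rcE -rmorphM -rmorphD lecR.
  have := sum_le_scale s (fun w => hpt f w); lra.
Qed.

Lemma opdist_self a eps : opdist_le L a a eps.
Proof.
move=> f _ s us eta eta0; exists s; split => //.
rewrite !sqsumE !rcE -rmorphM -rmorphD lecR.
rewrite big1; last by move=> w _; rewrite subrr nm0 expr0n.
have : 0 <= \sum_(w <- s) nm (f w) ^+ 2 by apply: sumr_ge0 => w _; rewrite exprn_ge0 ?nm_ge0.
have := sqr_ge0 eps; nra.
Qed.

Lemma alg0_inA p : alg0 L p -> inA L p.
Proof.
move=> hp; split.
  have [m [hm [[C [C0 hC]] _]]] := alg0_diag hp.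
  exact: (diag_bounded C0 hC hm).
by move=> eps _; exists p; split => //; apply: opdist_self.
Qed.

Lemma opdist_pt x p eps f M : 0 < eps -> opdist_le L x p eps -> l2 L f -> l2bound f M ->
  forall w, nm (x f w - p f w) ^+ 2 <= eps ^+ 2 * (M + 1).
Proof.
move=> e0 hd hf hM w.
have [t [ut]] := hd f hf [:: w] isT (eps ^+ 2) (exprn_gt0 _ e0).
rewrite !sqsumE !rcE -rmorphM -rmorphD lecR big_seq1.
have := hM t ut; have := sqr_ge0 eps; nra.
Qed.

Lemma approx a eps : inA L a -> 0 < eps -> eps <= 1 -> exists m : WW -> CC R,
  inv_m m /\ forall f M, l2 L f -> l2bound f M ->
    forall w, nm (a f w - m w * f w) ^+ 2 <= eps * (M + 1).
Proof.
move=> [_ ha] e0 e1; have [p [hp hd]] := ha eps e0.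
have [m [hm [_ im]]] := alg0_diag hp.
exists m; split => // f M hf hM w.
have := opdist_pt e0 hd hf hM w; rewrite hm.
have M0 := l2bound_ge0 hM.
have : eps ^+ 2 <= eps by rewrite expr2 ger_pMl.
nra.
Qed.

Lemma inA_supp a f w : inA L a -> l2 L f -> ~~ L w -> a f w = 0.
Proof. by move=> [[hb _] _] hf hw; have [hs _] := l2P (hb f hf); apply: hs. Qed.

Lemma diagv a f w : inA L a -> l2 L f -> L w -> a f w = a (ev w) w * f w.
Proof.
move=> ha hf hw; have [_ [M hM]] := l2P hf; have M0 := l2bound_ge0 hM.
apply/eqP; rewrite -subr_eq0; apply/eqP.
apply: (nm_small (K := 6 * M + 2)) => e e0 e1.
have [m [_ hm]] := approx ha e0 e1.
have h1 := hm f M hf hM w.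
have h2 := hm (ev w) 1 (ev_l2 hw) (@ev_bound w) w.
move: h2; rewrite /ev eqxx mulr1 nmB => h2.
have -> : a f w - a (fun w0 => if w0 == w then 1 else 0) w * f w =
          (a f w - m w * f w) + (m w - a (fun w0 => if w0 == w then 1 else 0) w) * f w.
  by rewrite mulrBl addrA subrK.
apply: le_trans (nmDsq _ _) _; rewrite nmXM.
have := l2_pt w hM; have := nm_ge0 (f w).
move: h1 h2; set A := nm _ ^+ 2; set B := nm _ ^+ 2; set Cq := nm (f w).
move=> h1 h2 hC hCM.
have hB : 0 <= B by rewrite /B exprn_ge0 ?nm_ge0.
have hA : 0 <= A by rewrite /A exprn_ge0 ?nm_ge0.
have : B * Cq ^+ 2 <= e * (1 + 1) * M.
  by apply: ler_pM; rewrite ?exprn_ge0 ?nm_ge0.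
set BC := B * Cq ^+ 2; lra.
Qed.

Lemma key_eq a u v : inA L a -> L u -> L v ->
  (forall mu, L mu -> L (wcat mu u) = L (wcat mu v)) -> a (ev u) u = a (ev v) v.
Proof.
move=> ha hu hv huv; apply/eqP; rewrite -subr_eq0; apply/eqP.
apply: (nm_small (K := 8)) => e e0 e1.
have [m [im hm]] := approx ha e0 e1.
have h1 := hm (ev u) 1 (ev_l2 hu) (@ev_bound u) u.
have h2 := hm (ev v) 1 (ev_l2 hv) (@ev_bound v) v.
move: h1 h2; rewrite /ev !eqxx !mulr1 (im u v huv) => h1 h2.
have -> : a (fun w0 => if w0 == u then 1 else 0) u - a (fun w0 => if w0 == v then 1 else 0) v =
  (a (fun w0 => if w0 == u then 1 else 0) u - m v) + (m v - a (fun w0 => if w0 == v then 1 else 0) v).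
  by rewrite addrA subrK.
apply: le_trans (nmDsq _ _) _; rewrite [nm (m v - _)]nmB; lra.
Qed.

Lemma xi_sum i k f s : uniq s -> exists t, uniq t /\
  \sum_(v <- s) nm (xi i k f v) ^+ 2 <= \sum_(u <- t) nm (f u) ^+ 2.
Proof.
move=> us; set Pk := fun v : WW => ohead (v i) == Some k.
exists (map (strip (delta i k)) (filter Pk s)); split.
  rewrite map_inj_in_uniq ?filter_uniq // => v1 v2.
  rewrite !mem_filter => /andP [h1 _] /andP [h2 _] e.
  by rewrite -(wcat_strip (mu := delta i k) (v := v1)) ?pre_delta // e wcat_strip // pre_delta.
rewrite big_map big_filter [X in _ <= X]big_mkcond /=; apply: ler_sum => v _.
rewrite xiE /Pk; case: (ohead (v i) == Some k) => /=; last by rewrite nm0 expr0n.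
by case: ifP => _ //; rewrite nm0 expr0n exprn_ge0 ?nm_ge0.
Qed.

Lemma xi_bounded i k : bounded L (xi i k).
Proof.
split; last split; last split.
- move=> f /l2P [hs [M hM]]; apply: (l2_of (M := M)).
    by move=> v hv; rewrite xiE (negbTE hv) andbF.
  move=> s us; have [t [ut ht]] := xi_sum i k f us.
  exact: le_trans ht (hM t ut).
- move=> f g _ _; apply: functional_extensionality => v; rewrite !xiE.
  by case: ifP => _ //; rewrite addr0.
- move=> z f _; apply: functional_extensionality => v; rewrite !xiE.
  by case: ifP => _ //; rewrite mulr0.
- exists 1; split => // f _ s us eta eta0.
  have [t [ut ht]] := xi_sum i k f us; exists t; split => //.
  rewrite !sqsumE !rcE -rmorphM -rmorphD lecR expr1n mul1r; lra.
Qed.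

Lemma xi_inX i k : L (delta i k) -> inX L i (xi i k).
Proof.
move=> hd; split; first exact: xi_bounded.
move=> eps _; exists (xi i k); split; last exact: opdist_self.
apply: spanX_gen => //; apply: alg0_inA; exact: alg0_gen.
Qed.

Lemma L_delta_of i k u : L (wcat (delta i k) u) -> L (delta i k).
Proof. exact: L_wcat_l. Qed.

Lemma kill a i k u : in_ker_phi L i a -> L (wcat (delta i k) u) ->
  a (ev (wcat (delta i k) u)) = fun _ => 0.
Proof.
move=> [_ hk] hw.
have := hk (xi i k) (xi_inX (L_delta_of hw)) (ev u) (ev_l2 (L_wcat_r hw)).
by rewrite /opmul xi_ev.
Qed.

Lemma l2D f g : l2 L f -> l2 L g -> l2 L (fun w => f w + g w).
Proof.
move=> /l2P [hf [M1 h1]] /l2P [hg [M2 h2]].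
apply: (l2_of (M := 2 * M1 + 2 * M2)).
  by move=> w hw; rewrite hf // hg // addr0.
move=> s us.
have hs : \sum_(w <- s) nm (f w + g w) ^+ 2 <= \sum_(w <- s) (2 * nm (f w) ^+ 2 + 2 * nm (g w) ^+ 2).
  by apply: ler_sum => w _; apply: nmDsq.
apply: le_trans hs _.
rewrite big_split /= -!mulr_sumr.
have := h1 s us; have := h2 s us; lra.
Qed.

Lemma l2Z z f : l2 L f -> l2 L (fun w => z * f w).
Proof.
move=> /l2P [hf [M h]].
apply: (l2_of (M := nm z ^+ 2 * M)).
  by move=> w hw; rewrite hf // mulr0.
move=> s us; rewrite -(eq_bigr _ (fun w _ => esym (nmXM z (f w)))) -mulr_sumr.
by apply: ler_wpM2l; rewrite ?exprn_ge0 ?nm_ge0 ?h.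
Qed.

Lemma inA_eq a b : (forall f, l2 L f -> a f = b f) -> inA L b -> inA L a.
Proof.
move=> hab [[hb1 [hb2 [hb3 [c [c0 hb4]]]]] hb5]; split; last first.
  move=> eps e0; have [p [hp hd]] := hb5 eps e0; exists p; split => //.
  by move=> f hf; rewrite hab //; apply: hd.
split; last split; last split.
- by move=> f hf; rewrite hab //; apply: hb1.
- move=> f g hf hg; etransitivity; first exact: (hab _ (l2D hf hg)).
  etransitivity; first exact: (hb2 f g hf hg).
  by apply: functional_extensionality => w; rewrite (hab f hf) (hab g hg).
- move=> z f hf; etransitivity; first exact: (hab _ (l2Z z hf)).
  etransitivity; first exact: (hb3 z f hf).
  by apply: functional_extensionality => w; rewrite (hab f hf).
- by exists c; split => // f hf; rewrite hab //; apply: hb4.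
Qed.

Lemma spanX_zero i p : spanX L i p -> forall g w, w i = [::] -> p g w = 0.
Proof.
elim=> {p} [|k a _ _|a b _ ha _ hb|z a _ ha] g w hw.
- by [].
- by rewrite /opmul /T pre_delta hw.
- by rewrite /opadd ha // hb // addr0.
- by rewrite /opscale ha // mulr0.
Qed.

Lemma inX_zero i x f w : inX L i x -> l2 L f -> w i = [::] -> x f w = 0.
Proof.
move=> [_ hx] hf hw; have [_ [M hM]] := l2P hf; have M0 := l2bound_ge0 hM.
apply: (nm_small (K := M + 1)) => e e0 e1.
have [p [hp hd]] := hx e e0.
have := opdist_pt e0 hd hf hM w; rewrite (spanX_zero hp) // subr0.
have : e ^+ 2 <= e by rewrite expr2 ger_pMl.
nra.
Qed.

Lemma bigop_pt (I : Type) (r : seq I) (Pr : pred I) (G : I -> OO) f w :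
  (\big[@opadd R d N/@op0 R d N]_(k <- r | Pr k) G k) f w = \sum_(k <- r | Pr k) G k f w.
Proof.
by apply: (big_rec2 (fun (x : OO) y => x f w = y)) => // k y1 y2 _ <-.
Qed.

Lemma P_E i f w : P L i f w = if (w i != [::]) && L w then f w else 0.
Proof.
rewrite /P bigop_pt.
rewrite (eq_bigr (fun k => if (ohead (w i) == Some k) && L w then f w else 0)); last first.
  move=> k _; rewrite /opmul /T pre_delta /Tadj.
  case: ifP => // /andP [hp hLw]; rewrite wcat_strip ?hLw // pre_delta //.
case E: (w i) => [|y s] /=.
  by rewrite big1.
rewrite (bigD1 y) //= eqxx /= big1 ?addr0 // => k hk.
by case: eqP => // -[e]; rewrite e eqxx in hk.
Qed.

Lemma IP_E i f w : opsub (@opid R d N) (P L i) f w = if (w i != [::]) && L w then 0 else f w.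
Proof. by rewrite /opsub /opid P_E; case: ifP; rewrite ?subrr ?subr0. Qed.

Definition Qok (G : {set 'I_N}) w :=
  all (fun j => (j \in G) ==> (w j == [::])) (index_enum 'I_N).

Lemma Q_seq (G : {set 'I_N}) f (s : seq 'I_N) : supp f ->
  (\big[@opmul R d N/@opid R d N]_(j <- s | j \in G) opsub (@opid R d N) (P L j)) f =
  fun w => if all (fun j => (j \in G) ==> (w j == [::])) s then f w else 0.
Proof.
move=> hf; elim: s => [|j s IH].
  by rewrite big_nil; apply: functional_extensionality.
rewrite big_cons; case: ifP => hj.
  apply: functional_extensionality => w; rewrite /opmul IP_E IH /= hj /=.
  case: (eqVneq (w j) [::]) => h //=.
  case: ifP => // hLw; case: ifP => // _; exact: hf (negbT hLw).
by rewrite IH; apply: functional_extensionality => w /=; rewrite hj.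
Qed.

Lemma Q_E (G : {set 'I_N}) f : supp f -> Q L G f = fun w => if Qok G w then f w else 0.
Proof. move=> hf; exact: Q_seq. Qed.

Lemma QokP (G : {set 'I_N}) w : reflect (forall j, j \in G -> w j = [::]) (Qok G w).
Proof.
apply: (iffP allP) => h j.
  by move=> hj; have := h j (mem_index_enum j); rewrite hj => /eqP.
by move=> _; apply/implyP => /h ->.
Qed.

Lemma Q_l2 (G : {set 'I_N}) f : l2 L f -> l2 L (Q L G f).
Proof.
move=> hf2; have [hf [M hM]] := l2P hf2; rewrite Q_E //.
apply: (l2_of (M := M)).
  by move=> w hw; rewrite hf //; case: ifP.
move=> s us; apply: le_trans (hM s us); apply: ler_sum => w _.
by case: ifP => _ //; rewrite nm0 expr0n exprn_ge0 ?nm_ge0.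
Qed.

Lemma e0P w : (forall j, w j = [::]) -> w = e0.
Proof. by move=> h; apply/ffunP => j; rewrite ffunE h. Qed.

Lemma wcatw0 mu : wcat mu e0 = mu.
Proof. by apply/ffunP=> i; rewrite !ffunE cats0. Qed.

Lemma nonempty_coord w : w != e0 -> exists j, w j != [::].
Proof.
move=> hw; case: (boolP [exists j, w j != [::]]) => [/existsP //|/existsPn hn].
by move/negP: hw; case; apply/eqP; apply: e0P => j; apply/eqP; have := hn j; rewrite negbK.
Qed.

Lemma split_w j w : w j != [::] -> exists y, w = wcat (delta j y) (strip (delta j y) w).
Proof.
case E: (w j) => [|y s] // _; exists y.
by rewrite wcat_strip // pre_delta E.
Qed.

Lemma kill_at a j w : in_ker_phi L j a -> L w -> w j != [::] -> a (ev w) w = 0.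
Proof.
move=> hk hw hj; have [y ey] := split_w hj.
by rewrite ey (kill hk) -?ey.
Qed.

Lemma ev_supp u : L u -> supp (ev u).
Proof. by move/ev_l2/l2P => []. Qed.

Lemma Q_ev (G : {set 'I_N}) u : L u -> Qok G u -> Q L G (ev u) = ev u.
Proof.
move=> hu hq; rewrite Q_E; last exact: ev_supp hu.
apply: functional_extensionality => w.
by rewrite /ev; case: eqP => [->|]; [rewrite hq | case: ifP].
Qed.

Lemma Qok_e0 (G : {set 'I_N}) : Qok G e0.
Proof. by apply/QokP => j _; rewrite ffunE. Qed.

Definition c3 (F : {set 'I_N}) := forall (i : 'I_N) (k : 'I_d), i \in F -> L (delta i k) ->
      exists mu : WW, L mu /\ ~~ L (wcat mu (delta i k)).

Lemma not_c3 (F : {set 'I_N}) i k : i \in F -> L (delta i k) ->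
  ~ (exists mu : WW, L mu /\ ~~ L (wcat mu (delta i k))) ->
  forall mu, L mu -> L (wcat mu e0) = L (wcat mu (delta i k)).
Proof.
move=> hi hd hno mu hmu; rewrite wcatw0 hmu; apply/esym/negPn/negP => hn.
by apply: hno; exists mu.
Qed.

Lemma delta_ne0 i k : delta i k != e0.
Proof. by apply/eqP => /ffunP /(_ i); rewrite !ffunE eqxx. Qed.

Lemma i_to_iii (F : {set 'I_N}) a : (forall i, i \in F -> in_ker_phi L i a) ->
  ~ opeq L (opmul a (Q L (~: F))) (@op0 R d N) -> c3 F.
Proof.
move=> hk hne i k hi hd; apply: NNPP => hno.
have hinv := not_c3 hi hd hno.
have ha := (hk i hi).1.
apply: hne => f hf; apply: functional_extensionality => w; rewrite /opmul /op0.
have hg := Q_l2 (~: F) hf.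
case hw: (L w); last exact: inA_supp ha hg (negbT hw).
rewrite (diagv ha hg hw).
case: (eqVneq w e0) => [ew|hne0].
  rewrite ew (key_eq ha hL0 hd hinv).
  have -> : delta i k = wcat (delta i k) e0 by rewrite wcatw0.
  by rewrite (kill (hk i hi)) ?wcatw0 // mul0r.
rewrite Q_E; last by have [] := l2P hf.
case: ifP => hq; last by rewrite mulr0.
have [j hj] := nonempty_coord hne0.
have hjF : j \in F.
  apply: contraT => hjn; move/QokP: hq => /(_ j); rewrite in_setC hjn => /(_ isT) e.
  by rewrite e in hj.
by rewrite (kill_at (hk j hjF) hw hj) mul0r.
Qed.

Lemma ii_to_iii (F : {set 'I_N}) a : inA L a ->
  opeq L (opmul a (Q L (~: F))) (@Qempty R d N) -> c3 F.
Proof.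
move=> ha heq i k hi hd; apply: NNPP => hno.
have hinv := not_c3 hi hd hno.
have h0 := heq (ev e0) (ev_l2 hL0).
have h1 := heq (ev (delta i k)) (ev_l2 hd).
rewrite /opmul Q_ev ?Qok_e0 // in h0.
rewrite /opmul Q_ev // in h1; last first.
  apply/QokP => j; rewrite in_setC => hj; rewrite ffunE.
  by case: eqP => // e; rewrite e hi in hj.
have := key_eq ha hL0 hd hinv; rewrite h0 h1 /Qempty /ev eqxx (negbTE (delta_ne0 i k)).
by move/eqP; rewrite oner_eq0.
Qed.

Lemma iii_construct (F : {set 'I_N}) : c3 F -> exists a0 (S : pred WW),
  alg0 L a0 /\ (forall f w, a0 f w = if S w then f w else 0) /\ S e0 /\
  (forall w, S w -> L w /\ forall i, i \in F -> w i = [::]).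
Proof.
move=> h3.
have hex : forall pk : 'I_N * 'I_d, exists mu,
  (fun mu => L mu && (((pk.1 \in F) && L (delta pk.1 pk.2)) ==> ~~ L (wcat mu (delta pk.1 pk.2)))) mu.
  case=> i k /=; case hc: ((i \in F) && L (delta i k)).
    move/andP: hc => [hi hd]; have [mu [h1 h2]] := h3 i k hi hd.
    by exists mu; rewrite h1 h2.
  by exists e0; rewrite hL0.
pose mu := fun pk => xchoose (hex pk).
have hmu : forall pk, L (mu pk) && (((pk.1 \in F) && L (delta pk.1 pk.2)) ==>
    ~~ L (wcat (mu pk) (delta pk.1 pk.2))) := fun pk => xchooseP (hex pk).
clearbody mu.
pose S := fun w => all (fun pk => L (wcat (mu pk) w)) (index_enum ('I_N * 'I_d)%type) && L w.
exists (\big[@opmul R d N/gen e0]_(pk <- index_enum ('I_N * 'I_d)%type) gen (mu pk)), S.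
split; last split; last split.
- apply: (big_rec (alg0 L)); first exact: alg0_gen.
  move=> pk x _ hx; apply: alg0_mul => //; apply: alg0_gen.
  by have /andP [] := hmu pk.
- move=> f w; rewrite /S; elim: (index_enum _) => [|pk s IH].
    by rewrite big_nil genE wcat0.
  rewrite big_cons /opmul genE IH /=.
  by case: (L (wcat (mu pk) w)).
- rewrite /S hL0 andbT; apply/allP => pk _; rewrite wcatw0.
  by have /andP [] := hmu pk.
- move=> w /andP [hall hw]; split => // i hi.
  case E: (w i) => [|k r] //; exfalso.
  have hpre : forall j, prefix (delta i k j) (w j).
    by apply/forallP; rewrite pre_delta E.
  have hd : L (delta i k) by apply: hsub hw _ => j; apply: prefixW.
  have := hmu (i, k); rewrite /= hi hd /= => /andP [_ hn].
  move/negP: hn; apply; apply: hsub (allP hall (i, k) (mem_index_enum _)) _ => j.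
  rewrite !ffunE; apply: prefixW; rewrite prefix_catr // eqxx /=.
  by have := hpre j; rewrite ffunE.
Qed.

Lemma eq_ii (F : {set 'I_N}) a0 (S : pred WW) :
  (forall f w, a0 f w = if S w then f w else 0) -> S e0 ->
  (forall w, S w -> L w /\ forall i, i \in F -> w i = [::]) ->
  opeq L (opmul a0 (Q L (~: F))) (@Qempty R d N).
Proof.
move=> ha0 hS0 hSp f hf; apply: functional_extensionality => w.
rewrite /opmul ha0 Q_E; last by have [] := l2P hf.
rewrite /Qempty; case: (boolP (S w)) => hS.
  have [hw hF0] := hSp w hS; case: ifP => hq.
    have ew : w = e0.
      apply: e0P => j; case: (boolP (j \in F)) => hj; first exact: hF0 j hj.
      by apply: (elimT (QokP _ _) hq); rewrite in_setC hj.
    by rewrite ew eqxx.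
  by case: eqP => // ew; rewrite ew Qok_e0 in hq.
by case: eqP => // ew; rewrite ew hS0 in hS.
Qed.

Lemma L13 (F : {set 'I_N}) : (exists a, (forall i, i \in F -> in_ker_phi L i a) /\
   ~ opeq L (opmul a (Q L (~: F))) (@op0 R d N)) <-> c3 F.
Proof.
split; first by case=> a [h1 h2]; exact: i_to_iii h1 h2.
move=> h3; have [a0 [S [hal [ha0 [hS0 hSp]]]]] := iii_construct h3.
exists a0; split.
  move=> i hi; split; first exact: alg0_inA.
  move=> x hx f hf; apply: functional_extensionality => w.
  rewrite /opmul ha0 /op0; case: ifP => hS //.
  by have [_ hF0] := hSp w hS; exact: inX_zero hx hf (hF0 i hi).
move=> heq; have := eq_ii ha0 hS0 hSp (ev_l2 hL0).
rewrite heq; last exact: ev_l2 hL0.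
move/(congr1 (fun g => g e0)).
by rewrite /Qempty /ev /op0 eqxx => /eqP; rewrite eq_sym oner_eq0.
Qed.

Lemma L23 (F : {set 'I_N}) : (exists a, inA L a /\
   opeq L (opmul a (Q L (~: F))) (@Qempty R d N)) <-> c3 F.
Proof.
split; first by case=> a [h1 h2]; exact: ii_to_iii h1 h2.
move=> h3; have [a0 [S [hal [ha0 [hS0 hSp]]]]] := iii_construct h3.
exists a0; split; first exact: alg0_inA.
exact: eq_ii ha0 hS0 hSp.
Qed.

Lemma Qc_setT : Q L (~: [set: 'I_N]) = @opid R d N.
Proof. by rewrite setCT /Q big_pred0 // => i; rewrite in_set0. Qed.

Lemma L4 (i0 : 'I_N) : c3 [set: 'I_N] -> forall a,
  (forall i, in_ker_phi L i a) <-> (exists z : CC R, opeq L a (opscale z (@Qempty R d N))).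
Proof.
move=> h3; have [a0 [S [hal [ha0 [hS0 hSp]]]]] := iii_construct h3.
have a0E : forall f w, a0 f w = Qempty f w.
  move=> f w; rewrite ha0 /Qempty; case: (boolP (S w)) => hS.
    have [_ h] := hSp w hS.
    have -> : w = e0 by apply: e0P => j; exact: h j (in_setT j).
    by rewrite eqxx.
  by case: eqP => // ew; rewrite ew hS0 in hS.
move=> a; split.
  move=> hk; have ha := (hk i0).1; exists (a (ev e0) e0) => f hf.
  apply: functional_extensionality => w; rewrite /opscale /Qempty.
  case hw: (L w).
    rewrite (diagv ha hf hw); case: eqP => [->|ne] //.
    have [j hj] := nonempty_coord (introN eqP ne).
    by rewrite (kill_at (hk j) hw hj) mul0r mulr0.
  rewrite (inA_supp ha hf (negbT hw)); case: eqP => [ew|]; last by rewrite mulr0.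
  by rewrite ew hL0 in hw.
move=> [z hz] i; split.
  apply: (inA_eq hz).
  have -> : opscale z (@Qempty R d N) = opscale z a0.
    apply: functional_extensionality => f; apply: functional_extensionality => w.
    by rewrite /opscale a0E.
  by apply: alg0_inA; apply: alg0_scale.
move=> x hx f hf; have hxf : l2 L (x f) := (hx.1).1 f hf.
rewrite /opmul (hz _ hxf); apply: functional_extensionality => w.
rewrite /opscale /Qempty /op0; case: eqP => [->|_]; last by rewrite mulr0.
by rewrite (inX_zero hx hf) ?mulr0 // ffunE.
Qed.

Lemma L4' : (forall a,
  (forall i, in_ker_phi L i a) <-> (exists z : CC R, opeq L a (opscale z (@Qempty R d N)))) ->
  c3 [set: 'I_N].
Proof.
move=> h4; apply/L13; exists (@Qempty R d N); split.
  move=> i _; apply: (proj2 (h4 _)); exists 1 => f _.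
  by apply: functional_extensionality => w; rewrite /opscale mul1r.
rewrite Qc_setT => h; have := h (ev e0) (ev_l2 hL0).
move/(congr1 (fun g => g e0)); rewrite /opmul /opid /Qempty /op0 /ev eqxx.
by move/eqP; rewrite oner_eq0.
Qed.

End Lang.

Theorem proposition9p17 (R : realType) (d N : nat) (L : pred (W d N))
    (F : {set 'I_N}) :
  factorial_language L -> F != set0 ->
  let Fc := ~: F in
  let cond_i := exists a : Op R d N,
      (forall i, i \in F -> in_ker_phi L i a) /\
      ~ opeq L (opmul a (Q L Fc)) (@op0 R d N) in
  let cond_ii := exists a : Op R d N,
      inA L a /\ opeq L (opmul a (Q L Fc)) (@Qempty R d N) in
  let cond_iii := forall (i : 'I_N) (k : 'I_d), i \in F -> L (delta i k) ->
      exists mu : W d N, L mu /\ ~~ L (wcat mu (delta i k)) in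
  let cond_iv := forall a : Op R d N,
      (forall i, in_ker_phi L i a) <->
      (exists z : CC R, opeq L a (opscale z (@Qempty R d N))) in
  let cond_v := exists a : Op R d N,
      (forall i, in_ker_phi L i a) /\ ~ opeq L a (@op0 R d N) in
  let cond_vi := exists a : Op R d N, inA L a /\ opeq L a (@Qempty R d N) in
  (cond_i <-> cond_ii) /\ (cond_ii <-> cond_iii) /\
  (F = setT -> (cond_iii <-> cond_iv) /\ (cond_iii <-> cond_v) /\
               (cond_iii <-> cond_vi)).
Proof.
move=> [hdel hsubw] hF; cbv zeta.
have [i0 _] := set0Pn _ hF.
have hL0 : L (emptyW d N).
  have [k hk] := hdel i0; apply: hsubw hk _ => j; rewrite ffunE; exact: infix0s.
have e1 := @L13 R d N L hsubw hL0 F.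
have e2 := @L23 R d N L hsubw hL0 F.
split; first by rewrite /c3 in e1 e2; tauto.
split; first by rewrite /c3 in e1 e2; tauto.
move=> hT; subst F.
have e4 := @L4 R d N L hsubw hL0 i0.
have e4' := @L4' R d N L hsubw hL0.
rewrite Qc_setT in e1 e2.
rewrite /c3 in e1 e2 e4 e4'.
split; first tauto.
split.
  split.
    move=> h3; have [a [h1 h2]] := proj2 e1 h3; exists a; split; last exact: h2.
    by move=> i; apply: h1; exact: in_setT.
  move=> [a [h1 h2]]; apply: (proj1 e1); exists a; split; last exact: h2.
  by move=> i _; apply: h1.
split.
  move=> h3; have [a [h1 h2]] := proj2 e2 h3; exists a; split; [exact: h1 | exact: h2].
move=> [a [h1 h2]]; apply: (proj1 e2); exists a; split; [exact: h1 | exact: h2].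
Qed.
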